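(* In any graph $G$, every nice stable set is a strong stable set.
   Context: A stable set is a set of pairwise non-adjacent vertices. A strong stable set is a stable set meeting every maximal (by inclusion) clique of $G$. Contracting vertices $x_1,\dots,x_k$ means deleting them and adding a new vertex adjacent to every remaining vertex that is adjacent to at least one of $x_1,\dots,x_k$. A nice stable set is a maximal (by inclusion) stable set $S$ together with a linear ordering $s_1,\dots,s_k$ of its elements such that for every $i\in\{2,\dots,k\}$, in the graph obtained from $G$ by contracting $s_1,\dots,s_{i-1}$ into a new vertex $w_{i-1}$, there is no induced path on four vertices with endpoints $w_{i-1}$ and $s_i$ (i.e. no chordless path $w_{i-1}$-$a$-$b$-$s_i$). *)

(* Defs.v *)
(* A simple graph on vertex set V : {set U} (U : finType)
   with adjacency r : rel U (only its restriction to V matters). *)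
From mathcomp Require Import all_boot.
Set Implicit Arguments. Unset Strict Implicit. Unset Printing Implicit Defensive.

Section Graphs.
Variable U : finType.
Variable r : rel U.

Definition stable (A : {set U}) : bool :=
  [forall x in A, forall y in A, ~~ r x y].

Definition clique (A : {set U}) : bool :=
  [forall x in A, forall y in A, (x != y) ==> r x y].

Definition induced_P4 (V : {set U}) (p1 p2 p3 p4 : U) : bool :=
  [&& p1 \in V, p2 \in V, p3 \in V, p4 \in V,
      uniq [:: p1; p2; p3; p4],
      [&& r p1 p2, r p2 p3 & r p3 p4] &
      [&& ~~ r p1 p3, ~~ r p1 p4 & ~~ r p2 p4]].

Definition has_induced_P4_ends (V : {set U}) (x y : U) : bool :=
  [exists a, exists b, induced_P4 V x a b y].
End Graphs.

Section Contraction.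
Variable T : finType.
Variable e : rel T.

(* Contraction of the vertices of X (in the graph with vertex set [set: T]):
   vertex type option T, where None is the new vertex w and Some v is an
   old vertex v. *)
Definition contr_vertices (X : {set T}) : {set option T} :=
  None |: [set Some v | v in ~: X].

Definition contr_rel (X : {set T}) : rel (option T) :=
  fun u v =>
    match u, v with
    | Some x, Some y => e x y
    | None, Some y => [exists x in X, e x y]
    | Some y, None => [exists x in X, e x y]
    | None, None => false
    end.
End Contraction.

Definition maximal_stable (T : finType) (e : rel T) (S : {set T}) : bool :=
  maxset (stable e) S.
Definition maximal_clique (T : finType) (e : rel T) (K : {set T}) : bool :=
  maxset (clique e) K.

Definition strong_stable (T : finType) (e : rel T) (S : {set T}) : Prop :=
  stable e S /\ forall K : {set T}, maximal_clique e K -> S :&: K != set0.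

(* nice stable set: S maximal stable, with a linear ordering s = s_1..s_k
   (a duplicate-free sequence enumerating S) such that for every
   i in {2..k} (0-based index i in 1..k-1), in the graph obtained by
   contracting s_1..s_{i-1} (= take i s) into w (= None), there is no induced
   P4 with endpoints w and s_i (= Some (nth _ s i)). *)
Definition nice_stable (T : finType) (e : rel T) (S : {set T}) : Prop :=
  maximal_stable e S /\
  exists s : seq T,
    [/\ uniq s, S = [set x in s] &
        forall (i : nat) (x0 : T), 0 < i < size s ->
          ~~ has_induced_P4_ends (contr_rel e [set x in take i s])
               (contr_vertices [set x in take i s]) None (Some (nth x0 s i))].

(* Main.v *)
Require Import Defs.
From mathcomp Require Import all_boot.

Lemma nbr_in_S (T : finType) (e : rel T) (e_sym : symmetric e)
  (e_irr : irreflexive e) (S : {set T}) x :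
  maximal_stable e S -> x \notin S -> [exists y in S, e x y].
Proof.
move=> /maxsetP [stS maxS] xS; case: (boolP [exists y in S, e x y]) => // /exists_inPn H; exfalso.
have st : stable e (x |: S).
  apply/forall_inP => a /setU1P [->|aS]; apply/forall_inP => b /setU1P [->|bS].
  - by rewrite e_irr.
  - exact: H.
  - by rewrite e_sym; exact: H.
  - by move/forall_inP: stS => /(_ a aS) /forall_inP; apply.
have := maxS _ st (subsetUr _ _) => E.
by move: xS; rewrite -E setU11.
Qed.

Lemma nth_notin_take (T : eqType) (s : seq T) (x0 : T) j :
  uniq s -> j < size s -> nth x0 s j \notin take j s.
Proof.
move=> us js; move: us; rewrite -{1}(cat_take_drop j s) cat_uniq (drop_nth x0 js).
by case/and3P => _ /hasPn H _; apply: (H _ (mem_head _ _)).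
Qed.

Theorem lemma3 (T : finType) (e : rel T)
  (e_sym : symmetric e) (e_irr : irreflexive e) (T_nonempty : 0 < #|T|)
  (S : {set T}) :
  nice_stable e S -> strong_stable e S.
Proof.
move=> [mS [s [us defS nice]]].
have stS : stable e S by case/maxsetP: mS.
split => // K mK.
apply/negP => /eqP KS0.
have notS : forall x, x \in K -> x \notin S.
  move=> x xK; apply/negP => xS.
  by have := in_set0 x; rewrite -KS0 inE xS xK.
case/maxsetP: mK => clK maxK.
have [x0 x0K] : exists x0, x0 \in K.
  apply/set0Pn/negP => /eqP K0.
  case/card_gt0P: T_nonempty => y _.
  have cl1 : clique e [set y].
    by apply/forall_inP => a /set1P ->; apply/forall_inP => b /set1P ->; rewrite eqxx.
  have := maxK _ cl1; rewrite K0 sub0set => /(_ isT) /setP /(_ y).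
  by rewrite set11 in_set0.
have hasN : forall u, u \in K -> has (e u) s.
  move=> u uK; case/exists_inP: (@nbr_in_S _ _ e_sym e_irr _ _ mS (notS u uK)) => y.
  by rewrite defS inE => ys eu; apply/hasP; exists y.
pose f u := find (e u) s.
case: (arg_maxnP f x0K) => v vK fmax.
set j := f v.
have js : j < size s by rewrite -has_find; exact: hasN.
set sj := nth x0 s j.
have evsj : e v sj by exact: nth_find (hasN v vK).
have sjS : sj \in S by rewrite defS inE mem_nth.
have sjK : sj \notin K by apply/negP => /notS; rewrite sjS.
have [u uK nusj] : exists2 u, u \in K & ~~ e u sj.
  case: (boolP [forall u in K, e sj u]) => [H|/forall_inPn [u uK H]].
    have cl : clique e (sj |: K).
      apply/forall_inP => a /setU1P [->|aK]; apply/forall_inP => b /setU1P [->|bK].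
      - by rewrite eqxx.
      - by move/forall_inP: H => /(_ b bK) ->; rewrite implybT.
      - by rewrite e_sym; move/forall_inP: H => /(_ a aK) ->; rewrite implybT.
      - by move/forall_inP: clK => /(_ a aK) /forall_inP; apply.
    have := maxK _ cl (subsetUr _ _) => E.
    by move: sjK; rewrite -E setU11.
  by exists u => //; rewrite e_sym.
have fuj : f u < j.
  have le : f u <= j := fmax u uK.
  rewrite ltn_neqAle le andbT; apply/eqP => fuE.
  by move: nusj; rewrite /sj -fuE nth_find // hasN.
have j0 : 0 < j by apply: leq_ltn_trans fuj.
have := nice j x0; rewrite j0 js => /(_ isT) /negP; apply.
set X := [set x in take j s].
have inV : forall y, y \notin take j s -> Some y \in contr_vertices X.
  by move=> y yt; rewrite /contr_vertices in_setU1 imset_f ?orbT // !inE.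
have notsK : forall y, y \in K -> y \notin take j s.
  move=> y yK; apply/negP => /mem_take ys.
  by move: (notS y yK); rewrite defS inE ys.
have uv : u != v by apply/eqP => E; move: nusj; rewrite E evsj.
have usj : u != sj by apply/eqP => E; move: sjK; rewrite -E uK.
have vsj : v != sj by apply/negP => /eqP E; move/negP: sjK; apply; rewrite -E.
have euv : e u v by move/forall_inP: clK => /(_ u uK) /forall_inP /(_ v vK); rewrite uv.
have wu : contr_rel e X None (Some u).
  apply/exists_inP; exists (nth x0 s (f u)).
    rewrite inE -(nth_take x0 fuj); apply: mem_nth; rewrite size_takel //; exact: ltnW.
  by rewrite e_sym; apply: nth_find; apply: hasN.
have wv : ~~ contr_rel e X None (Some v).
  apply/exists_inPn => x; rewrite inE => xt.
  have ix : index x (take j s) < j.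
    by move: xt; rewrite -index_mem size_takel // ltnW.
  rewrite -(nth_index x0 xt) (nth_take x0 ix) e_sym.
  by rewrite (before_find x0 ix).
have wsj : ~~ contr_rel e X None (Some sj).
  apply/exists_inPn => x; rewrite inE => /mem_take xs.
  have xS : x \in S by rewrite defS inE.
  by move/forall_inP: stS => /(_ x xS) /forall_inP /(_ sj sjS).
apply/existsP; exists (Some u); apply/existsP; exists (Some v).
rewrite /induced_P4 /contr_vertices setU11 /=.
rewrite (inV u (notsK u uK)) (inV v (notsK v vK)) (inV sj (nth_notin_take _ _ x0 _ us js)) /=.
rewrite /contr_rel in wu wv wsj.
rewrite -/sj !inE /= !(inj_eq Some_inj) negb_or uv usj vsj wu euv evsj wv wsj nusj.
by [].
Qed.
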